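(* Let $G^1=\langle V^1,s^1_1,s^1_2,\mathsf{null}^1,\mathsf{root}^1\rangle$ and $G^2=\langle V^2,s^2_1,s^2_2,\mathsf{null}^2,\mathsf{root}^2\rangle$ be graphs and let $G^1\times G^2$ be their Cartesian product. Then for every graph $G$: $G\to G^1\times G^2$ if and only if $G\to G^1$ and $G\to G^2$.
   Context: A graph is a tuple $\langle V,s_1,s_2,\mathsf{null},\mathsf{root}\rangle$ with $V$ finite, $\mathsf{root}\neq\mathsf{null}$ in $V$, $s_1,s_2\subseteq V\times V$, and $\langle\mathsf{null},x\rangle\in s_i$ iff $x=\mathsf{null}$. A homomorphism $h:G\to G'$ is a map on nodes with $\langle x,y\rangle\in s_i\Rightarrow\langle h(x),h(y)\rangle\in s_i'$, $h(x)=\mathsf{root}'$ iff $x=\mathsf{root}$, $h(x)=\mathsf{null}'$ iff $x=\mathsf{null}$; $G\to G'$ means one exists. The Cartesian product $G^0=G^1\times G^2=\langle V^0,s^0_1,s^0_2,\mathsf{null}^0,\mathsf{root}^0\rangle$ has $\mathsf{null}^0=\langle\mathsf{null}^1,\mathsf{null}^2\rangle$, $\mathsf{root}^0=\langle\mathsf{root}^1,\mathsf{root}^2\rangle$, $V^0=\{\mathsf{null}^0,\mathsf{root}^0\}\cup(V^1\setminus\{\mathsf{null}^1,\mathsf{root}^1\})\times(V^2\setminus\{\mathsf{null}^2,\mathsf{root}^2\})$, and for $i\in\{1,2\}$, $s^0_i=\{\langle\langle x^1,x^2\rangle,\langle y^1,y^2\rangle\rangle : \langle x^1,x^2\rangle,\langle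 y^1,y^2\rangle\in V^0,\ \langle x^1,y^1\rangle\in s^1_i,\ \langle x^2,y^2\rangle\in s^2_i\}$. *)

(* Defs.v *)
From mathcomp Require Import all_boot.
Unset Printing Implicit Defensive.

Record pgraph := PGraph {
  vert : finType;
  s1 : rel vert;
  s2 : rel vert;
  null : vert;
  root : vert }.

Definition is_graph (G : pgraph) : Prop :=
  root G <> null G /\
  (forall x, @s1 G (null G) x <-> x = null G) /\
  (forall x, @s2 G (null G) x <-> x = null G).

Definition is_hom (G G' : pgraph) (h : vert G -> vert G') : Prop :=
  (forall x y, @s1 G x y -> @s1 G' (h x) (h y)) /\
  (forall x y, @s2 G x y -> @s2 G' (h x) (h y)) /\
  (forall x, h x = root G' <-> x = root G) /\
  (forall x, h x = null G' <-> x = null G).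

Definition hom_exists (G G' : pgraph) : Prop := exists h, is_hom G G' h.

Section Product.
Variables G1 G2 : pgraph.

Definition prod_pred (p : vert G1 * vert G2) : bool :=
  [|| p == (null G1, null G2), p == (root G1, root G2) |
      [&& p.1 != null G1, p.1 != root G1, p.2 != null G2 & p.2 != root G2]].

Definition prod_vert : finType := {p : vert G1 * vert G2 | prod_pred p}.

Lemma prod_null_proof : prod_pred (null G1, null G2).
Proof. by rewrite /prod_pred eqxx. Qed.

Lemma prod_root_proof : prod_pred (root G1, root G2).
Proof. by rewrite /prod_pred eqxx orbT. Qed.

Definition prod_null : prod_vert := exist prod_pred _ prod_null_proof.
Definition prod_root : prod_vert := exist prod_pred _ prod_root_proof.

Definition prod_s1 : rel prod_vert := fun x y =>
  @s1 G1 (val x).1 (val y).1 && @s1 G2 (val x).2 (val y).2.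
Definition prod_s2 : rel prod_vert := fun x y =>
  @s2 G1 (val x).1 (val y).1 && @s2 G2 (val x).2 (val y).2.

Definition prod_graph : pgraph :=
  @PGraph prod_vert prod_s1 prod_s2 prod_null prod_root.
End Product.

(* Main.v *)
Require Import Defs.
From mathcomp Require Import all_boot.

Theorem proposition25 (G1 G2 : pgraph) (hG1 : is_graph G1) (hG2 : is_graph G2)
  (G : pgraph) (hG : is_graph G) :
  hom_exists G (prod_graph G1 G2) <-> hom_exists G G1 /\ hom_exists G G2.
Proof.
split.
- move=> [h [e1 [e2 [hr hn]]]].
  have key : forall x, ((val (h x)).1 = Defs.root G1 \/ (val (h x)).2 = Defs.root G2 -> h x = prod_root G1 G2)
    /\ ((val (h x)).1 = null G1 \/ (val (h x)).2 = null G2 -> h x = prod_null G1 G2).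
    move=> x; have := valP (h x); rewrite /prod_pred.
    case/or3P => [/eqP E|/eqP E|/and4P [n1 r1 n2 r2]].
    + rewrite E /=; split; last by move=> _; apply/val_inj; rewrite /= E.
      case=> E'.
      * by have [Hr _] := hG1; exfalso; apply: Hr.
      * by have [Hr _] := hG2; exfalso; apply: Hr.
    + rewrite E /=; split; first by move=> _; apply/val_inj; rewrite /= E.
      case=> E'.
      * by have [Hr _] := hG1; exfalso; apply: Hr.
      * by have [Hr _] := hG2; exfalso; apply: Hr.
    + split; case=> E; exfalso.
      * by rewrite E eqxx in r1.
      * by rewrite E eqxx in r2.
      * by rewrite E eqxx in n1.
      * by rewrite E eqxx in n2.
  split.
  + exists (fun x => (val (h x)).1); split; [|split; [|split]].
    * by move=> x y /e1 /andP [].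
    * by move=> x y /e2 /andP [].
    * move=> x; split.
      - by move=> E; apply/hr; apply: (proj1 (key x)); left.
      - by move=> /hr ->.
    * move=> x; split.
      - by move=> E; apply/hn; apply: (proj2 (key x)); left.
      - by move=> /hn ->.
  + exists (fun x => (val (h x)).2); split; [|split; [|split]].
    * by move=> x y /e1 /andP [].
    * by move=> x y /e2 /andP [].
    * move=> x; split.
      - by move=> E; apply/hr; apply: (proj1 (key x)); right.
      - by move=> /hr ->.
    * move=> x; split.
      - by move=> E; apply/hn; apply: (proj2 (key x)); right.
      - by move=> /hn ->.
- move=> [[h1 [a1 [b1 [r1 n1]]]] [h2 [a2 [b2 [r2 n2]]]]].
  have P : forall x, prod_pred G1 G2 (h1 x, h2 x).
    move=> x; rewrite /prod_pred /=.
    case: (eqVneq x (null G)) => [->|xn].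
      by rewrite (proj2 (n1 _) erefl) (proj2 (n2 _) erefl) eqxx.
    case: (eqVneq x (Defs.root G)) => [->|xr].
      by rewrite (proj2 (r1 _) erefl) (proj2 (r2 _) erefl) eqxx orbT.
    apply/orP; right; apply/orP; right; apply/and4P; split; apply/eqP.
    + by move/n1; apply/eqP.
    + by move/r1; apply/eqP.
    + by move/n2; apply/eqP.
    + by move/r2; apply/eqP.
  exists (fun x => exist (prod_pred G1 G2) _ (P x) : vert (prod_graph G1 G2)).
  split; [|split; [|split]].
  + by move=> x y e; rewrite /= /prod_s1 /= a1 ?a2.
  + by move=> x y e; rewrite /= /prod_s2 /= b1 ?b2.
  + move=> x; split.
    * by move=> /(congr1 val) [] /r1.
    * by move=> ->; apply/val_inj; rewrite /= (proj2 (r1 _) erefl) (proj2 (r2 _) erefl).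
  + move=> x; split.
    * by move=> /(congr1 val) [] /n1.
    * by move=> ->; apply/val_inj; rewrite /= (proj2 (n1 _) erefl) (proj2 (n2 _) erefl).
Qed.
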